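(* Let $R$ be a nontrivial locally finite commutative ring. Then for every alphabet $\Sigma$, $\mathrm{RevL}(R,\Sigma)$ equals the Boolean closure of $\mathrm{RevL}(\mathbb{B},\Sigma)$ (the smallest set of languages over $\Sigma$ containing $\mathrm{RevL}(\mathbb{B},\Sigma)$ and closed under complementation in $\Sigma^*$, finite unions and finite intersections); i.e., the class $\mathrm{RevL}(R)$ is the Boolean closure of $\mathrm{RevL}(\mathbb{B})$.
   Context: A ring is a semiring $(R,+,\cdot,0,1)$ whose additive monoid is an abelian group; nontrivial means $0\neq1$; locally finite means every subsemiring generated by a finite subset is finite. $\mathbb{B}=(\{0,1\},\lor,\land,0,1)$ is the Boolean semiring. For a semiring $S$ and finite nonempty alphabet $\Sigma$, a series is a map $r\colon\Sigma^*\to S$ with value $(r,w)$ and support $\mathrm{supp}(r)=\{w\mid(r,w)\neq0\}$. A weighted automaton over $S$ and $\Sigma$ is $\mathcal{A}=(Q,\sigma,\iota,\tau)$ with $Q$ finite, $\sigma\colon Q\times\Sigma\times Q\to S$, $\iota,\tau\colon Q\to S$; a run on $w=a_1\cdots a_t$ is $q_0a_1q_1\cdots a_tq_t$ with all $\sigma(q_{k-1},a_k,q_k)\neq0$, of weight $\iota(q_0)\sigma(q_0,a_1,q_1)\cdots\sigma(q_{t-1},a_t,q_t)\tau(q_t)$, and $(\|\mathcal{A}\|,w)$ is the sum of weights of all runs on $w$. $\mathcal{A}$ is reversible if for all $p,p',q,q'\in Q$, $a\in\Sigma$: $\sigma(p,a,q)\neq0\neq\sigma(p,a,q')$ implies $q=q'$,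 and $\sigma(p,a,q)\neq0\neq\sigma(p',a,q)$ implies $p=p'$. $\mathrm{RevL}(S,\Sigma)$ is the set of supports of series realised by reversible weighted automata over $S$ and $\Sigma$, and $\mathrm{RevL}(S)$ is the class of these over all alphabets. $\mathrm{RevL}(\mathbb{B},\Sigma)$ is exactly the set of languages recognised by reversible finite automata in the sense of Pin (transition relation deterministic and codeterministic, arbitrary sets of initial and final states). *)

(* Defs.v *)
From HB Require Import structures.
From mathcomp Require Import all_boot all_order all_algebra.

Set Implicit Arguments.
Unset Strict Implicit.
Unset Printing Implicit Defensive.

Import GRing.Theory.
Local Open Scope ring_scope.

Definition boolB : Type := bool.
HB.instance Definition _ := Choice.on boolB.
HB.instance Definition _ :=
  GRing.isNmodule.Build boolB orbA orbC orFb.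
HB.instance Definition _ :=
  GRing.Nmodule_isComNzSemiRing.Build boolB andbA andbC andTb
    andb_orl andFb isT.

Inductive gen_semiring (S : pzSemiRingType) (X : seq S) : S -> Prop :=
  | gen_in x : x \in X -> gen_semiring X x
  | gen_0 : gen_semiring X 0
  | gen_1 : gen_semiring X 1
  | gen_add x y : gen_semiring X x -> gen_semiring X y -> gen_semiring X (x + y)
  | gen_mul x y : gen_semiring X x -> gen_semiring X y -> gen_semiring X (x * y).

Definition locally_finite (S : pzSemiRingType) : Prop :=
  forall X : seq S, exists s : seq S, forall x, gen_semiring X x -> x \in s.

Section WA.
Variables (S : pzSemiRingType) (Sigma : finType) (Q : finType).
Variables (sigma : Q -> Sigma -> Q -> S) (iota tau : Q -> S).

(* [is_run p w qs]: p a_1 q_1 ... a_t q_t is a run on w = a_1...a_t,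
   with qs = [:: q_1; ...; q_t], all transitions having nonzero weight. *)
Fixpoint is_run (p : Q) (w : seq Sigma) (qs : seq Q) : bool :=
  match w, qs with
  | a :: w', q :: qs' => (sigma p a q != 0) && is_run q w' qs'
  | [::], [::] => true
  | _, _ => false
  end.

Fixpoint run_weight (p : Q) (w : seq Sigma) (qs : seq Q) : S :=
  match w, qs with
  | a :: w', q :: qs' => sigma p a q * run_weight q w' qs'
  | _, _ => tau p
  end.

Definition behaviour (w : seq Sigma) : S :=
  \sum_(q0 : Q) \sum_(qs : (size w).-tuple Q | is_run q0 w qs)
     iota q0 * run_weight q0 w qs.

Definition reversible : Prop :=
  (forall p q q' a, sigma p a q != 0 -> sigma p a q' != 0 -> q = q') /\
  (forall p p' q a, sigma p a q != 0 -> sigma p' a q != 0 -> p = p').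
End WA.

Definition language (Sigma : finType) := seq Sigma -> Prop.

Definition RevL (S : pzSemiRingType) (Sigma : finType) (L : language Sigma) : Prop :=
  exists (Q : finType) (sigma : Q -> Sigma -> Q -> S) (iota tau : Q -> S),
    reversible sigma /\
    forall w, L w <-> behaviour sigma iota tau w != 0.

Inductive bool_closure (Sigma : finType) (C : language Sigma -> Prop)
    : language Sigma -> Prop :=
  | bc_base L : C L -> bool_closure C L
  | bc_ext L L' : bool_closure C L -> (forall w, L w <-> L' w) -> bool_closure C L'
  | bc_compl L : bool_closure C L -> bool_closure C (fun w => ~ L w)
  | bc_union L1 L2 : bool_closure C L1 -> bool_closure C L2 ->
                     bool_closure C (fun w => L1 w \/ L2 w)
  | bc_inter L1 L2 : bool_closure C L1 -> bool_closure C L2 ->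
                     bool_closure C (fun w => L1 w /\ L2 w).

(* Main.v *)
Require Import Defs.
From HB Require Import structures.
From mathcomp Require Import all_boot all_order all_algebra.
From Stdlib Require Import Classical.
From mathcomp Require Import zify.

Set Implicit Arguments.
Unset Strict Implicit.
Unset Printing Implicit Defensive.
Import GRing.Theory.
Local Open Scope ring_scope.

Section Gen.
Variables (Sigma Q : finType).

Fixpoint trace (step : Q -> Sigma -> option Q) (p : Q) (w : seq Sigma)
  : option (seq Q) :=
  match w with
  | [::] => Some [::]
  | a :: w' => match step p a with
               | Some q => omap (cons q) (trace step q w')
               | None => None end
  end.

Fixpoint endst (step : Q -> Sigma -> option Q) (p : Q) (w : seq Sigma)
  : option Q :=
  match w with
  | [::] => Some p
  | a :: w' => match step p a with
               | Some q => endst step q w'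
               | None => None end
  end.

Lemma endst_trace step p w : endst step p w = omap (last p) (trace step p w).
Proof.
elim: w p => [|a w IH] p //=.
case: (step p a) => [q|] //=; rewrite IH; by case: (trace step q w).
Qed.

Lemma size_trace step p w qs : trace step p w = Some qs -> size qs = size w.
Proof.
elim: w p qs => [|a w IH] p qs /=; first by case=> <-.
case: (step p a) => [q|] //.
case E: (trace step q w) => [qs'|] //= [<-] /=.
by rewrite (IH _ _ E).
Qed.

Variable (S : pzSemiRingType) (sigma : Q -> Sigma -> Q -> S) (iota tau : Q -> S)
  (step : Q -> Sigma -> option Q).
Hypothesis Hstep : forall p a q, (sigma p a q != 0) = (step p a == Some q).

Lemma is_run_trace p w qs : is_run sigma p w qs = (trace step p w == Some qs).
Proof.
elim: w p qs => [|a w IH] p [|q qs] //=.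
- by case: (step p a) => [q|] //; case: (trace step q w).
- rewrite Hstep IH.
  case E: (step p a) => [q'|] //=.
  case: (eqVneq q' q) => [->|ne].
  + rewrite eqxx /=; case: (trace step q w) => [x|] //=.
    by apply/eqP/eqP => [[->]|[->]].
  + have -> : (Some q' == Some q) = false by apply/negbTE/eqP => -[] /eqP; rewrite (negbTE ne).
    case: (trace step q' w) => //= qs'.
    by apply/esym/eqP => -[] /eqP; rewrite (negbTE ne).
Qed.

Lemma behaviour_trace w : behaviour sigma iota tau w =
  \sum_q0 match trace step q0 w with
          | Some qs => iota q0 * run_weight sigma tau q0 w qs
          | None => 0 end.
Proof.
apply: eq_bigr => q0 _.
case E: (trace step q0 w) => [qs|].
- have Hs := size_trace E.
  have Hs' : size qs == size w by rewrite Hs.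
  rewrite (big_pred1 (Tuple Hs')) //.
  move=> t /=; rewrite is_run_trace E.
  apply/eqP/eqP => [[Ht]|->] //.
  by apply: val_inj; rewrite /= Ht.
- rewrite big_pred0 // => t; by rewrite is_run_trace E.
Qed.

Lemma rw_one p w qs : (forall p a q, step p a = Some q -> sigma p a q = 1) ->
  trace step p w = Some qs -> run_weight sigma tau p w qs = tau (last p qs).
Proof.
move=> H1; elim: w p qs => [|a w IH] p qs /=; first by case=> <-.
case E: (step p a) => [q|] //.
case E2: (trace step q w) => [qs'|] //= [<-] /=.
by rewrite (H1 _ _ _ E) mul1r (IH _ _ E2).
Qed.

End Gen.
Definition pstep (S : pzSemiRingType) (Sigma Q : finType) (sigma : Q -> Sigma -> Q -> S)
  (p : Q) (a : Sigma) : option Q := [pick q | sigma p a q != 0].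

Lemma pstep_spec (S : pzSemiRingType) (Sigma Q : finType) (sigma : Q -> Sigma -> Q -> S) :
  reversible sigma -> forall p a q, (sigma p a q != 0) = (pstep sigma p a == Some q).
Proof.
move=> [Hd _] p a q; rewrite /pstep.
case: pickP => [q' Hq'|H0].
- apply/idP/eqP => [Hq|[<-] //]. by rewrite (Hd _ _ _ _ Hq' Hq).
- by rewrite H0.
Qed.

Lemma pstep_inj (S : pzSemiRingType) (Sigma Q : finType) (sigma : Q -> Sigma -> Q -> S) :
  reversible sigma -> forall p p' a q, pstep sigma p a = Some q -> pstep sigma p' a = Some q -> p = p'.
Proof.
move=> Hr p p' a q H1 H2; have [_ Hc] := Hr.
apply: (Hc p p' q a); rewrite pstep_spec // ?H1 ?H2 //.
Qed.

Lemma natb_neq0 (S : nzSemiRingType) (b : bool) : ((b%:R : S) != 0) = b.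
Proof. by case: b; rewrite ?oner_neq0 ?eqxx. Qed.

Lemma RevL_ext (S : pzSemiRingType) (Sigma : finType) (L L' : language Sigma) :
  RevL S L -> (forall w, L w <-> L' w) -> RevL S L'.
Proof.
move=> [Q [sg [io [ta [Hr HL]]]]] H; exists Q, sg, io, ta; split=> // w.
by rewrite -H.
Qed.

Lemma RevL_det (S : nzSemiRingType) (Sigma Q : finType) (step : Q -> Sigma -> option Q)
  (Hinj : forall p p' a q, step p a = Some q -> step p' a = Some q -> p = p')
  (iota tau : Q -> S) :
  RevL S (fun w => \sum_q0 iota q0 * odflt 0 (omap tau (endst step q0 w)) != 0).
Proof.
pose sg := fun p a q => ((step p a == Some q)%:R : S).
have Hs : forall p a q, (sg p a q != 0) = (step p a == Some q).
  by move=> p a q; rewrite /sg natb_neq0.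
exists Q, sg, iota, tau; split.
- split=> [p q q' a|p p' q a]; rewrite !Hs => /eqP H1 /eqP H2.
  + by move: H2; rewrite H1 => -[].
  + exact: Hinj H1 H2.
- move=> w; rewrite (behaviour_trace _ _ Hs).
  suff -> : \sum_q0 match trace step q0 w with
          | Some qs => iota q0 * run_weight sg tau q0 w qs
          | None => 0 end = \sum_q0 iota q0 * odflt 0 (omap tau (endst step q0 w)) by [].
  apply: eq_bigr => q0 _; rewrite endst_trace.
  case E: (trace step q0 w) => [qs|] /=; last by rewrite mulr0.
  rewrite (@rw_one _ _ _ sg tau _ _ _ _ _ E) // => p a q H; by rewrite /sg H eqxx.
Qed.
Lemma RevL_detB (Sigma Q : finType) (step : Q -> Sigma -> option Q)
  (Hinj : forall p p' a q, step p a = Some q -> step p' a = Some q -> p = p')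
  (c0 : Q) (f : pred Q) :
  RevL boolB (fun w : seq Sigma => match endst step c0 w with Some q => f q | None => false end : Prop).
Proof.
apply: RevL_ext (RevL_det Hinj (fun q => ((q == c0)%:R : boolB)) (fun q => (f q)%:R)) _.
move=> w; rewrite (bigD1 c0) //= big1 ?addr0; last first.
  by move=> q /negbTE ->; rewrite mul0r.
rewrite eqxx mul1r; case: (endst step c0 w) => [q|] /=.
- by rewrite natb_neq0.
- by [].
Qed.

Section BC.
Variable Sigma : finType.
Notation BCB := (bool_closure (@RevL boolB Sigma)).

Lemma bc_false : BCB (fun _ => False).
Proof.
have H := @RevL_detB Sigma unit (fun _ _ => None) ltac:(by []) tt xpred0.
have B := bc_base H.
apply: bc_ext (bc_inter B (bc_compl B)) _.
by move=> w; tauto.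
Qed.

Lemma bc_true : BCB (fun _ => True).
Proof. apply: bc_ext (bc_compl bc_false) _; by move=> w; tauto. Qed.

Lemma bc_ex (X : eqType) (s : seq X) (F : X -> language Sigma) :
  (forall x, x \in s -> BCB (F x)) -> BCB (fun w => exists2 x, x \in s & F x w).
Proof.
elim: s => [|y s IH] H.
- apply: bc_ext bc_false _ => w; split=> // -[x]; by rewrite in_nil.
- have H1 : BCB (F y) by apply: H; rewrite inE eqxx.
  have H2 := IH (fun x hx => H x (@mem_behead _ (y :: s) x hx)).
  apply: bc_ext (bc_union H1 H2) _ => w; split.
  + case=> [Hy|[x hx Hx]]; first by exists y; rewrite ?inE ?eqxx.
    by exists x; rewrite // inE hx orbT.
  + case=> x; rewrite inE => /orP [/eqP ->|hx] Hx; [by left|right; by exists x].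
Qed.

Lemma bc_all (X : eqType) (s : seq X) (F : X -> language Sigma) :
  (forall x, x \in s -> BCB (F x)) -> BCB (fun w => forall x, x \in s -> F x w).
Proof.
elim: s => [|y s IH] H.
- apply: bc_ext bc_true _ => w; split=> // _ x; by rewrite in_nil.
- have H1 : BCB (F y) by apply: H; rewrite inE eqxx.
  have H2 := IH (fun x hx => H x (@mem_behead _ (y :: s) x hx)).
  apply: bc_ext (bc_inter H1 H2) _ => w; split.
  + case=> Hy Hs x; rewrite inE => /orP [/eqP ->|hx] //; exact: Hs.
  + move=> Hx; split; first by apply: Hx; rewrite inE eqxx.
    by move=> x hx; apply: Hx; rewrite inE hx orbT.
Qed.

Lemma bc_fun (X : finType) (g : seq Sigma -> X) :
  (forall x, BCB (fun w => g w = x)) -> forall P : X -> Prop, BCB (fun w => P (g w)).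
Proof.
move=> Hf P.
have : BCB (fun w => exists2 x, x \in enum X & (P x /\ g w = x)).
  apply: bc_ex => x _.
  case: (classic (P x)) => Px.
  - by apply: bc_ext (Hf x) _ => w; split=> [->|[]].
  - by apply: bc_ext bc_false _ => w; split=> // -[].
move=> H; apply: bc_ext H _ => w; split.
- by case=> x _ [Px ->].
- by move=> Pg; exists (g w); rewrite ?mem_enum.
Qed.

End BC.
Section SerSec.
Variables (R : comNzRingType) (Sigma : finType).

Definition Ser (f : seq Sigma -> R) : Prop :=
  exists (Q : finType) (step : Q -> Sigma -> option Q) (iota tau : Q -> R),
   (forall p p' a q, step p a = Some q -> step p' a = Some q -> p = p') /\
   forall w, f w = \sum_q0 iota q0 * odflt 0 (omap tau (endst step q0 w)).

Lemma Ser_ext f g : Ser f -> (forall w, f w = g w) -> Ser g.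
Proof.
move=> [Q [st [io [ta [Hi Hf]]]]] H; exists Q, st, io, ta; split=> // w.
by rewrite -H.
Qed.

Lemma Ser_const c : Ser (fun _ => c).
Proof.
exists unit, (fun _ _ => Some tt), (fun _ => c), (fun _ => 1); split=> [[] [] //|w].
have E : forall p, endst (fun _ _ => Some tt) p w = Some tt.
  elim: w => [|a w IH] [] //=.
rewrite (big_pred1 tt) ?E /= ?mulr1 //; by case.
Qed.

Lemma Ser_add f g : Ser f -> Ser g -> Ser (fun w => f w + g w).
Proof.
move=> [Q1 [s1 [i1 [t1 [H1 E1]]]]] [Q2 [s2 [i2 [t2 [H2 E2]]]]].
pose st := fun (p : Q1 + Q2) a => match p with
  | inl p1 => omap inl (s1 p1 a) | inr p2 => omap inr (s2 p2 a) end.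
exists (Q1 + Q2)%type, st,
  (fun p => match p with inl p1 => i1 p1 | inr p2 => i2 p2 end),
  (fun p => match p with inl p1 => t1 p1 | inr p2 => t2 p2 end); split.
- have K1 : forall p a q, st (inl p) a = Some q -> exists2 q1, q = inl q1 & s1 p a = Some q1.
    by move=> p a q /=; case: (s1 p a) => [x|] //= [<-]; exists x.
  have K2 : forall p a q, st (inr p) a = Some q -> exists2 q1, q = inr q1 & s2 p a = Some q1.
    by move=> p a q /=; case: (s2 p a) => [x|] //= [<-]; exists x.
  move=> [p|p] [p'|p'] a q.
  + move=> /K1 [x -> Ex] /K1 [y [Ey] Ey']; subst; by rewrite (H1 _ _ _ _ Ex Ey').
  + by move=> /K1 [x -> Ex] /K2 [y].
  + by move=> /K2 [x -> Ex] /K1 [y].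
  + move=> /K2 [x -> Ex] /K2 [y [Ey] Ey']; subst; by rewrite (H2 _ _ _ _ Ex Ey').
- have L1 : forall p w, endst st (inl p) w = omap inl (endst s1 p w).
    move=> p w; elim: w p => [|a w IH] p //=; case: (s1 p a) => [x|] //=.
  have L2 : forall p w, endst st (inr p) w = omap inr (endst s2 p w).
    move=> p w; elim: w p => [|a w IH] p //=; case: (s2 p a) => [x|] //=.
  move=> w; rewrite big_sumType E1 E2; congr (_ + _); apply: eq_bigr => p _.
  + by rewrite L1; case: (endst s1 p w).
  + by rewrite L2; case: (endst s2 p w).
Qed.

Lemma Ser_mul f g : Ser f -> Ser g -> Ser (fun w => f w * g w).
Proof.
move=> [Q1 [s1 [i1 [t1 [H1 E1]]]]] [Q2 [s2 [i2 [t2 [H2 E2]]]]].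
pose st := fun (p : Q1 * Q2) a => match s1 p.1 a, s2 p.2 a with
  | Some q1, Some q2 => Some (q1, q2) | _, _ => None end.
exists (Q1 * Q2)%type, st, (fun p => i1 p.1 * i2 p.2),
  (fun p => t1 p.1 * t2 p.2); split.
- move=> [p1 p2] [p1' p2'] a [q1 q2]; rewrite /st /=.
  case E: (s1 p1 a) => [x|] //; case E': (s2 p2 a) => [y|] // [Ex Ey]; subst.
  case F: (s1 p1' a) => [x|] //; case F': (s2 p2' a) => [y|] // [Fx Fy]; subst.
  by rewrite (H1 _ _ _ _ E F) (H2 _ _ _ _ E' F').
- have L : forall p w, endst st p w = match endst s1 p.1 w, endst s2 p.2 w with
    | Some q1, Some q2 => Some (q1, q2) | _, _ => None end.
    move=> p w; elim: w p => [|a w IH] [p1 p2] //=; rewrite /st /=.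
    case: (s1 p1 a) => [x|] //; case: (s2 p2 a) => [y|] //=.
    by case: (endst s1 x w).
  move=> w; rewrite E1 E2 big_distrlr /= pair_bigA /=; apply: eq_bigr => [[p1 p2]] _ /=.
  rewrite L /=; case: (endst s1 p1 w) => [x|] /=; case: (endst s2 p2 w) => [y|] /=.
  + by rewrite mulrACA.
  + by rewrite !mulr0.
  + by rewrite !mulr0 mul0r.
  + by rewrite !mulr0.
Qed.

Lemma Ser_scale c f : Ser f -> Ser (fun w => c * f w).
Proof.
move=> [Q [st [io [ta [H E]]]]]; exists Q, st, (fun q => c * io q), ta; split=> // w.
by rewrite E mulr_sumr; apply: eq_bigr => q _; rewrite mulrA.
Qed.

Lemma Ser_prod (I : Type) (s : seq I) (F : I -> seq Sigma -> R) :
  (forall i, Ser (F i)) -> Ser (fun w => \prod_(i <- s) F i w).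
Proof.
move=> HF; elim: s => [|i s IH].
- by apply: Ser_ext (Ser_const 1) _ => w; rewrite big_nil.
- by apply: Ser_ext (Ser_mul (HF i) IH) _ => w; rewrite big_cons.
Qed.

End SerSec.
Lemma boolB_sum (Q : finType) (F : Q -> boolB) : (\sum_q F q != 0) = [exists q, F q].
Proof.
have -> : \sum_q F q = \big[orb/false]_(q <- index_enum Q) F q by [].
have E0 : forall x : boolB, (x != 0) = x by case.
rewrite E0 big_has; apply/idP/existsP => [/hasP [q _ Hq]|[q Hq]].
- by exists q.
- by apply/hasP; exists q; rewrite ?mem_index_enum.
Qed.

Lemma behaviour_det (S : pzSemiRingType) (Sigma Q : finType) (sg : Q -> Sigma -> Q -> S)
  (io ta : Q -> S) (step : Q -> Sigma -> option Q) :
  (forall p a q, (sg p a q != 0) = (step p a == Some q)) ->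
  (forall p a q, step p a = Some q -> sg p a q = 1) ->
  forall w, behaviour sg io ta w = \sum_q0 io q0 * odflt 0 (omap ta (endst step q0 w)).
Proof.
move=> Hs H1 w; rewrite (behaviour_trace _ _ Hs); apply: eq_bigr => q0 _.
rewrite endst_trace; case E: (trace step q0 w) => [qs|] /=; last by rewrite mulr0.
by rewrite (@rw_one _ _ _ sg ta _ _ _ _ H1 E).
Qed.

Section Dir2.
Variables (R : comNzRingType) (Sigma : finType).

Definition ind (f : seq Sigma -> R) (L : language Sigma) :=
  forall w, (L w /\ f w = 1) \/ (~ L w /\ f w = 0).

Lemma prod_ind (I : Type) (s : seq I) (c : I -> bool) :
  \prod_(i <- s) (1 - (c i)%:R : R) = (~~ has c s)%:R.
Proof.
elim: s => [|i s IH]; first by rewrite big_nil.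
rewrite big_cons IH /=; case: (c i) => /=; first by rewrite subrr mul0r.
by rewrite subr0 mul1r.
Qed.

Lemma Ser_base L : RevL boolB L -> exists f, Ser f /\ ind f L.
Proof.
move=> [Q [sg [io [ta [Hr HL]]]]].
pose step := pstep sg.
have Hs := pstep_spec Hr.
have Hi := pstep_inj Hr.
have H1 : forall p a q, step p a = Some q -> sg p a q = 1.
  move=> p a q E; have : sg p a q != 0 by rewrite Hs; apply/eqP.
  by case: (sg p a q).
pose b q0 w := odflt false (omap ta (endst step q0 w)).
have HL' : forall w, L w <-> exists q0, io q0 && b q0 w.
  move=> w; rewrite HL (@behaviour_det _ _ _ sg io ta step Hs H1) boolB_sum; split.
  - move=> /existsP [q0 Hq]; exists q0; move: Hq; rewrite /b.
    by case: (io q0); case: (endst step q0 w).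
  - move=> [q0 Hq]; apply/existsP; exists q0; move: Hq; rewrite /b.
    by case: (io q0); case: (endst step q0 w).
exists (fun w => 1 - \prod_(q0 <- enum Q) (1 - (io q0 && b q0 w)%:R)); split.
- have Hc : forall q0, Ser (fun w => ((io q0 && b q0 w)%:R : R)).
    move=> q0; exists Q, step, (fun q => ((q == q0) && io q0)%:R), (fun q => (ta q)%:R).
    split=> // w; rewrite (bigD1 q0) //= big1 ?addr0; last first.
      by move=> q /negbTE ->; rewrite mul0r.
    rewrite eqxx /b; case: (io q0); case: (endst step q0 w) => [x|] //=;
      by rewrite ?mul1r ?mul0r ?mulr0.
  have Hf : forall q0, Ser (fun w => 1 - ((io q0 && b q0 w)%:R : R)).
    move=> q0; apply: Ser_ext (Ser_add (Ser_const _ 1) (Ser_scale (-1) (Hc q0))) _.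
    by move=> w /=; rewrite mulN1r.
  apply: Ser_ext (Ser_add (Ser_const _ 1) (Ser_scale (-1) (Ser_prod (enum Q) Hf))) _.
  by move=> w /=; rewrite mulN1r.
- move=> w; rewrite prod_ind.
  case: (boolP (has (fun q0 => io q0 && b q0 w) (enum Q))) => /= Hh.
  + left; rewrite subr0; split=> //; apply/HL'.
    by move/hasP: Hh => [q0 _ Hq]; exists q0.
  + right; rewrite subrr; split=> //; move/HL' => [q0 Hq].
    by move/negP: Hh; apply; apply/hasP; exists q0; rewrite ?mem_enum.
Qed.

Lemma ind_bc L : bool_closure (@RevL boolB Sigma) L -> exists f, Ser f /\ ind f L.
Proof.
elim=> {L}.
- by move=> L; apply: Ser_base.
- move=> L L' _ [f [Sf If]] HLL; exists f; split=> // w.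
  by rewrite -HLL; apply: If.
- move=> L _ [f [Sf If]]; exists (fun w => 1 + (-1) * f w); split.
  + exact: Ser_add (Ser_const _ 1) (Ser_scale (-1) Sf).
  + move=> w; case: (If w) => [[Hl ->]|[Hl ->]].
    * by right; rewrite mulN1r subrr; split.
    * by left; rewrite mulr0 addr0; split.
- move=> L1 L2 _ [f1 [S1 I1]] _ [f2 [S2 I2]].
  exists (fun w => f1 w + f2 w + (-1) * (f1 w * f2 w)); split.
  + exact: Ser_add (Ser_add S1 S2) (Ser_scale (-1) (Ser_mul S1 S2)).
  + move=> w; case: (I1 w) => [[H1 ->]|[H1 ->]]; case: (I2 w) => [[H2 ->]|[H2 ->]].
    * by left; rewrite mulr1 mulN1r addrK; split=> //; left.
    * by left; rewrite mulr0 mulr0 !addr0; split=> //; left.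
    * by left; rewrite mul0r mulr0 addr0 add0r; split=> //; right.
    * by right; rewrite mul0r mulr0 !addr0; split=> // -[].
- move=> L1 L2 _ [f1 [S1 I1]] _ [f2 [S2 I2]].
  exists (fun w => f1 w * f2 w); split.
  + exact: Ser_mul S1 S2.
  + move=> w; case: (I1 w) => [[H1 ->]|[H1 ->]]; case: (I2 w) => [[H2 ->]|[H2 ->]].
    * by left; rewrite mulr1.
    * by right; rewrite mulr0; split=> // -[].
    * by right; rewrite mul0r; split=> // -[].
    * by right; rewrite mul0r; split=> // -[].
Qed.

Lemma dir2 L : bool_closure (@RevL boolB Sigma) L -> RevL R L.
Proof.
move=> /ind_bc [f [[Q [st [io [ta [Hi Ef]]]]] If]].
apply: RevL_ext (RevL_det Hi io ta) _ => w; rewrite -Ef.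
case: (If w) => [[Hl ->]|[Hl ->]]; first by rewrite oner_neq0.
by rewrite eqxx.
Qed.

End Dir2.
Section Counters.
Variables (Sigma Q : finType).

Fixpoint cnt (step : Q -> Sigma -> option Q) (t0 : Q * Sigma) (p : Q) (w : seq Sigma) : nat :=
  match w with
  | [::] => 0
  | a :: w' => (((p, a) == t0) + match step p a with
                                 | Some q => cnt step t0 q w' | None => 0 end)%N
  end.

Definition pstep2 (C : finType) (step : Q -> Sigma -> option Q) (t0 : Q * Sigma)
  (h : C -> option C) (x : Q * C) (a : Sigma) : option (Q * C) :=
  match step x.1 a with
  | None => None
  | Some q => if (x.1, a) == t0 then omap (pair q) (h x.2) else Some (q, x.2)
  end.

Fixpoint hn (C : Type) (h : C -> option C) (n : nat) (c : C) : option C :=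
  match n with 0 => Some c | n'.+1 => obind (hn h n') (h c) end.

Lemma endst_pstep2 (C : finType) step t0 (h : C -> option C) p c w :
  endst (pstep2 step t0 h) (p, c) w =
  obind (fun q => omap (pair q) (hn h (cnt step t0 p w) c)) (endst step p w).
Proof.
elim: w p c => [|a w IH] p c //=.
rewrite /pstep2 /=; case: (step p a) => [q|] //=.
case: eqP => _ /=.
- rewrite ?add0n /=; case: (h c) => [d|] /=; first exact: IH.
  by case: (endst step q w).
- by rewrite add0n IH.
Qed.

Lemma pstep2_inj (C : finType) step t0 (h : C -> option C) :
  (forall p p' a q, step p a = Some q -> step p' a = Some q -> p = p') ->
  (forall c c' d, h c = Some d -> h c' = Some d -> c = c') ->
  forall x x' a y, pstep2 step t0 h x a = Some y -> pstep2 step t0 h x' a = Some y -> x = x'.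
Proof.
move=> Hi Hh [p c] [p' c'] a [q d]; rewrite /pstep2 /=.
case E: (step p a) => [q1|] //; case E': (step p' a) => [q2|] //.
case: eqP => Ht; case: eqP => Ht'.
- case Hc: (h c) => [d1|] //= [Eq1 Ed1]; case Hc': (h c') => [d2|] //= [Eq2 Ed2].
  subst; rewrite (Hi _ _ _ _ E E') (Hh _ _ _ Hc Hc').
  by [].
- case Hc: (h c) => [d1|] //= [Eq1 _] [Eq2 _]; subst q1 q2.
  have Ep := Hi _ _ _ _ E E'; subst p'; by case: Ht'.
- move=> [Eq1 _]; case Hc': (h c') => [d2|] //= [Eq2 _]; subst q1 q2.
  have Ep := Hi _ _ _ _ E E'; subst p'; by case: Ht.
- move=> [Eq1 ->] [Eq2 ->]; subst; by rewrite (Hi _ _ _ _ E E').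
Qed.

End Counters.
Section Langs.
Variables (Sigma Q : finType) (step : Q -> Sigma -> option Q).
Hypothesis Hinj : forall p p' a q, step p a = Some q -> step p' a = Some q -> p = p'.
Notation BCB := (bool_closure (@RevL boolB Sigma)).
Local Open Scope nat_scope.

Definition hE (k : nat) (c : 'I_k.+1) : option 'I_k.+1 :=
  if c < k then Some (inord c.+1) else None.

Lemma hE_inj k c c' d : hE c = Some d -> hE c' = Some d -> c = c' :> 'I_k.+1.
Proof.
rewrite /hE; case: ifP => H1 // [<-]; case: ifP => H2 // -[] /(congr1 val).
rewrite /= !inordK // => -[] E; exact: val_inj.
Qed.

Lemma hn_hE k n (c : 'I_k.+1) :
  hn (@hE k) n c = if c + n <= k then Some (inord (c + n)) else None.
Proof.
elim: n c => [|n IH] c /=.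
- by rewrite addn0 -ltnS ltn_ord inord_val.
- rewrite /hE; case: ifP => Hc /=.
  + by rewrite IH inordK // addSnnS.
  + have -> : (c + n.+1 <= k) = false.
      apply/negbTE; move/negbT: Hc; rewrite -leqNgt; lia.
    by [].
Qed.

Definition hM (m : nat) (c : 'I_m.+1) : option 'I_m.+1 := Some (inord (c.+1 %% m.+1)).

Lemma hM_inj m c c' d : hM c = Some d -> hM c' = Some d -> c = c' :> 'I_m.+1.
Proof.
rewrite /hM => -[<-] /(congr1 (omap val)) /=.
rewrite !inordK ?ltn_pmod // => -[] /eqP.
rewrite -[c'.+1]addn1 -[c.+1]addn1 eqn_modDr !modn_small // => /eqP E; exact: val_inj.
Qed.

Lemma hn_hM m n (c : 'I_m.+1) : hn (@hM m) n c = Some (inord ((c + n) %% m.+1)).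
Proof.
elim: n c => [|n IH] c /=.
- by rewrite addn0 modn_small // inord_val.
- rewrite IH inordK ?ltn_pmod // modnDml addSnnS //.
Qed.

Lemma bc_end q0 (f : pred Q) :
  BCB (fun w => match endst step q0 w with Some q => f q | None => false end).
Proof. exact: bc_base (RevL_detB Hinj q0 f). Qed.

Lemma bc_exact q0 t0 k :
  BCB (fun w => endst step q0 w <> None /\ cnt step t0 q0 w = k).
Proof.
have Hi2 := @pstep2_inj Sigma Q _ step t0 (@hE k) Hinj (@hE_inj k).
apply: bc_ext (bc_base (RevL_detB Hi2 (q0, ord0) (fun x => val x.2 == k))) _ => w.
rewrite endst_pstep2 hn_hE add0n.
case: (endst step q0 w) => [q|] /=; last by split=> // -[].
case: ifP => Hle /=.
- rewrite inordK ?ltnS //; split=> [/eqP ->|[_ ->]] //.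
- split=> // -[_ E]; by move: Hle; rewrite E leqnn.
Qed.

Lemma bc_mod q0 t0 m r :
  BCB (fun w => endst step q0 w <> None /\ cnt step t0 q0 w %% m.+1 = r).
Proof.
have Hi2 := @pstep2_inj Sigma Q _ step t0 (@hM m) Hinj (@hM_inj m).
apply: bc_ext (bc_base (RevL_detB Hi2 (q0, ord0) (fun x => val x.2 == r))) _ => w.
rewrite endst_pstep2 hn_hM add0n.
case: (endst step q0 w) => [q|] /=; last by split=> // -[].
rewrite inordK ?ltn_pmod //; split=> [/eqP ->|[_ ->]] //.
Qed.

End Langs.
Lemma period (S : pzSemiRingType) (s : seq S) (x : S) :
  (forall n, x ^+ n \in s) ->
  forall a j, (size s <= a)%N -> x ^+ (a + j * (size s)`!) = x ^+ a.
Proof.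
move=> Hs; set N := size s.
pose u := [seq x ^+ i | i <- iota 0 N.+1].
have : ~~ uniq u.
  apply/negP => Hu.
  have Hsub : {subset u <= s} by move=> y /mapP [i _ ->].
  have := uniq_leq_size Hu Hsub.
  by rewrite size_map size_iota ltnn.
case/(uniqPn 0) => i [j [Hij Hj Heq]].
rewrite size_map size_iota in Hj.
rewrite !(nth_map 0%N) ?size_iota ?(ltn_trans Hij) // !nth_iota ?(ltn_trans Hij) // !add0n in Heq.
have Hd : forall b, (i <= b)%N -> x ^+ (b + (j - i)) = x ^+ b.
  move=> b Hb.
  have -> : (b + (j - i) = (b - i) + j)%N by lia.
  rewrite exprD -Heq -exprD; congr (_ ^+ _); lia.
have Hk : forall k b, (i <= b)%N -> x ^+ (b + k * (j - i)) = x ^+ b.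
  elim=> [|k IH] b Hb; first by rewrite mul0n addn0.
  have -> : (b + k.+1 * (j - i) = (b + k * (j - i)) + (j - i))%N.
    by rewrite mulSn; lia.
  rewrite Hd ?IH //; exact: leq_trans Hb (leq_addr _ _).
move=> a jj Ha.
have Hdv : ((j - i) %| N`!)%N by apply: dvdn_fact; apply/andP; split; lia.
by rewrite -(divnK Hdv) mulnA Hk //; lia.
Qed.

Lemma period2 (S : pzSemiRingType) (s : seq S) (x : S) :
  (forall n, x ^+ n \in s) ->
  forall n, (size s <= n)%N ->
  x ^+ n = x ^+ (size s * (size s)`! + n %% (size s)`!).
Proof.
move=> Hs n Hn; set N := size s; set P := N`!.
have HP : (0 < P)%N by apply: fact_gt0.
rewrite -(period Hs N Hn).
rewrite -(period Hs (n %/ P) (_ : (N <= N * P + n %% P)%N)); last first.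
  apply: leq_trans (leq_addr _ _); by rewrite leq_pmulr.
congr (_ ^+ _); rewrite -/P {1}(divn_eq n P); lia.
Qed.
Lemma dir1 (R : comNzRingType) (HR : locally_finite R) (Sigma : finType) (L : language Sigma) :
  RevL R L -> bool_closure (@RevL boolB Sigma) L.
Proof.
move=> [Q [sg [io [ta [Hr HL]]]]].
pose step := pstep sg.
have Hs : forall p a q, (sg p a q != 0) = (step p a == Some q) := pstep_spec Hr.
have Hi : forall p p' a q, step p a = Some q -> step p' a = Some q -> p = p' := pstep_inj Hr.
pose X := [seq sg x.1.1 x.1.2 x.2 | x <- enum [pred _ : (Q * Sigma * Q)%type | true]].
have [s Hsub] := HR X.
pose om (t : Q * Sigma) := sg t.1 t.2 (odflt t.1 (step t.1 t.2)).
have Hpow : forall t n, om t ^+ n \in s.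
  move=> t n; apply: Hsub; elim: n => [|n IH]; first by rewrite expr0; apply: gen_1.
  rewrite exprS; apply: gen_mul IH; apply: gen_in.
  apply/mapP; exists (t.1, t.2, odflt t.1 (step t.1 t.2)); by rewrite ?mem_enum.
set N := size s.
set M := (N`!).-1.
have HM : M.+1 = N`! by rewrite /M prednK // fact_gt0.
pose dec (k : 'I_N.+1) (r : 'I_M.+1) : nat := if (k < N)%N then val k else (N * M.+1 + val r)%N.
pose comp q0 w := omap (fun q => (q, [ffun t : Q * Sigma =>
    ((inord (minn (cnt step t q0 w) N) : 'I_N.+1), (inord (cnt step t q0 w %% M.+1) : 'I_M.+1))]))
    (endst step q0 w).
pose g w := [ffun q0 => comp q0 w].
pose H (v : {ffun Q -> option (Q * {ffun Q * Sigma -> 'I_N.+1 * 'I_M.+1})}) : R :=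
  \sum_q0 match v q0 with
          | None => 0
          | Some (q, f) => io q0 * ((\prod_t om t ^+ dec (f t).1 (f t).2) * ta q) end.
have Hrw : forall p w qs, trace step p w = Some qs ->
    run_weight sg ta p w qs = (\prod_t om t ^+ cnt step t p w) * ta (last p qs).
  move=> p w; elim: w p => [|a w IH] p qs /=.
    by case=> <- /=; rewrite big1 ?mul1r // => t _; rewrite expr0.
  case E: (step p a) => [q|] //.
  case E2: (trace step q w) => [qs'|] //= [<-] /=.
  rewrite (IH _ _ E2) mulrA; congr (_ * _).
  have -> : \prod_t om t ^+ (((p, a) == t) + cnt step t q w)%N =
     \prod_t (om t ^+ ((p, a) == t) * om t ^+ cnt step t q w).
    by apply: eq_bigr => t _; rewrite exprD.
  rewrite big_split /=; congr (_ * _).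
  rewrite (bigD1 (p, a)) //= eqxx expr1 big1 ?mulr1.
    by rewrite /om /= E.
  by move=> t /negbTE; rewrite eq_sym => ->; rewrite expr0.
have Hdec : forall t n, om t ^+ n = om t ^+ dec (inord (minn n N)) (inord (n %% M.+1)).
  move=> t n; rewrite /dec.
  case: (ltnP n N) => Hn.
  - have h : (n < N.+1)%N by rewrite ltnS ltnW.
    by rewrite /= inordK // Hn.
  - have h : (N < N.+1)%N by [].
    have h2 : (n %% M.+1 < M.+1)%N by rewrite ltn_pmod.
    rewrite /= !inordK // ltnn HM.
    exact: period2 (Hpow t) n Hn.
have Hbeh : forall w, behaviour sg io ta w = H (g w).
  move=> w; rewrite (behaviour_trace _ _ Hs); apply: eq_bigr => q0 _.
  rewrite ffunE /comp endst_trace; case E: (trace step q0 w) => [qs|] //=.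
  rewrite (Hrw _ _ _ E); congr (_ * (_ * _)); apply: eq_bigr => t _.
  by rewrite ffunE /=; exact: Hdec.
apply: (@bc_ext _ _ (fun w => H (g w) != 0)); last by move=> w; rewrite HL Hbeh.
suff Hfib : forall v, bool_closure (@RevL boolB Sigma) (fun w => g w = v).
  exact: (bc_fun Hfib (fun v => (H v != 0 : Prop))).
move=> v.
apply: (@bc_ext _ _ (fun w => forall q0, q0 \in enum Q -> comp q0 w = v q0)); last first.
  move=> w; split => [Hq|<- q0 _]; last by rewrite ffunE.
  apply/ffunP => q0; rewrite ffunE; apply: Hq; by rewrite mem_enum.
apply: bc_all => q0 _.
case: (v q0) => [[q f]|]; last first.
  apply: bc_ext (bc_compl (bc_end Hi q0 xpredT)) _ => w.
  rewrite /comp; case: (endst step q0 w) => [x|] /=; split=> // H0; exfalso; exact: H0.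
apply: (@bc_ext _ _ (fun w => (match endst step q0 w with Some q' => q' == q | None => false end : Prop) /\
   forall t, t \in enum [pred _ : (Q * Sigma)%type | true] ->
     ((endst step q0 w <> None /\ minn (cnt step t q0 w) N = nat_of_ord (f t).1) /\
      (endst step q0 w <> None /\ (cnt step t q0 w %% M.+1)%N = nat_of_ord (f t).2)))).
- apply: bc_inter; first exact: (bc_end Hi q0 (pred1 q)).
  apply: bc_all => t _; apply: bc_inter; last exact: bc_mod.
  have := ltn_ord (f t).1; move: (nat_of_ord (f t).1) => k Hk.
  case: (ltnP k N) => Hk2.
  + apply: bc_ext (bc_exact Hi q0 t k) _ => w.
    split=> -[En Ec]; split=> //; lia.
  + apply: bc_ext (bc_inter (bc_end Hi q0 xpredT)
       (bc_all (s := iota 0 N) (fun j _ => bc_compl (bc_exact Hi q0 t j)))) _ => w.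
    case: (endst step q0 w) => [q'|] /=; split.
    * move=> [_ Hall]; split=> //.
      case: (ltnP (cnt step t q0 w) N) => Hc; last by lia.
      exfalso; apply: (Hall (cnt step t q0 w)); first by rewrite mem_iota.
      by split.
    * move=> [_ Hm]; split=> // j; rewrite mem_iota => Hj [_ Ej]; lia.
    * by case.
    * by case.
- move=> w; rewrite /comp; case: (endst step q0 w) => [q'|] /=; last first.
    by split=> [[]|[]].
  split.
  + move=> [/eqP Eq Hall]; subst q'; congr (Some (_, _)).
    apply/ffunP => t; rewrite ffunE.
    have [[_ E1] [_ E2]] := Hall t (mem_enum _ t).
    move: E1 E2; case: (f t) => k r /= E1 E2.
    by rewrite E1 E2 !inord_val.
  + move=> [-> Ef]; split; first by rewrite eqxx.
    move=> t _; rewrite -Ef ffunE /= !inordK ?ltn_pmod ?ltnS ?geq_minr //.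
Qed.

Local Close Scope ring_scope.

Theorem theorem2 (R : comNzRingType) (HR : locally_finite R)
  (Sigma : finType) (HSigma : 0 < #|Sigma|) (L : language Sigma) :
  RevL R L <-> bool_closure (@RevL boolB Sigma) L.
Proof.
split; [exact: dir1 | exact: dir2].
Qed.
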